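(* For $\epsilon>0$ and $\Delta\in\mathbb{R}$ let $\mathrm{LB}(\alpha,\epsilon,\Delta):=\alpha\Delta+\alpha\int_{\alpha}^{1}\frac{1-t}{t(1-t)+\epsilon}\,dt+(1-\alpha)\int_{0}^{\alpha}\frac{t}{t(1-t)+\epsilon}\,dt$ for $\alpha\in[0,1]$. Then $$\frac{\partial\,\mathrm{LB}(\alpha,\epsilon,\Delta)}{\partial\alpha}=\Delta+\frac{1}{\sqrt{1+4\epsilon}}\log\left|\frac{\alpha-\frac{1+\sqrt{1+4\epsilon}}{2}}{\alpha-\frac{1-\sqrt{1+4\epsilon}}{2}}\right|,\qquad \frac{\partial^{2}\,\mathrm{LB}(\alpha,\epsilon,\Delta)}{\partial\alpha^{2}}=-\frac{1}{\alpha(1-\alpha)+\epsilon},$$ and consequently $\alpha\mapsto\mathrm{LB}(\alpha,\epsilon,\Delta)$ is strictly concave on $[0,1]$. *)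

(* Defs.v *)
From Stdlib Require Import Reals Lra.
From Coquelicot Require Import Coquelicot.
Open Scope R_scope.

Definition LB (alpha eps Delta : R) : R :=
  alpha * Delta
  + alpha * RInt (fun t => (1 - t) / (t * (1 - t) + eps)) alpha 1
  + (1 - alpha) * RInt (fun t => t / (t * (1 - t) + eps)) 0 alpha.

(* Main.v *)
Require Import Defs.
From Stdlib Require Import Reals Lra.
From Coquelicot Require Import Coquelicot.
Open Scope R_scope.

Lemma dmul (u v : R -> R) x du dv : is_derive u x du -> is_derive v x dv ->
  is_derive (fun x => u x * v x) x (du * v x + u x * dv).
Proof. intros. apply (is_derive_mult u v x du dv); auto. intros; apply Rmult_comm. Qed.
Lemma dadd (u v : R -> R) x du dv : is_derive u x du -> is_derive v x dv ->
  is_derive (fun x => u x + v x) x (du + dv).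
Proof. intros. apply (is_derive_plus u v x du dv); auto. Qed.
Lemma dsub (u v : R -> R) x du dv : is_derive u x du -> is_derive v x dv ->
  is_derive (fun x => u x - v x) x (du - dv).
Proof. intros. apply (is_derive_minus u v x du dv); auto. Qed.
Lemma dcomp (u v : R -> R) x du dv : is_derive u (v x) du -> is_derive v x dv ->
  is_derive (fun x => u (v x)) x (dv * du).
Proof. intros. apply (is_derive_comp u v x du dv); auto. Qed.
Lemma dconst (c x : R) : is_derive (fun _ => c) x 0.
Proof. apply (is_derive_const c x). Qed.
Lemma did (x : R) : is_derive (fun x => x) x 1.
Proof. apply (is_derive_id x). Qed.
Lemma dval (u : R -> R) x l l' : is_derive u x l -> l = l' -> is_derive u x l'.
Proof. intros; subst; auto. Qed.
Ltac fixeq := match goal with |- @eq _ ?A ?B => change (@eq R A B) end.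

Section S.
Variable eps : R.
Hypothesis heps : 0 < eps.
Let s := sqrt (1 + 4 * eps).
Let p := (1 + s) / 2.
Let m := (1 - s) / 2.
Let D t := t * (1 - t) + eps.
Let f := fun t => (1 - t) / (t * (1 - t) + eps).
Let g := fun t => t / (t * (1 - t) + eps).

Lemma s_sq : s * s = 1 + 4 * eps.
Proof. unfold s. apply sqrt_sqrt. lra. Qed.
Lemma s_gt1 : 1 < s.
Proof. unfold s. assert (H : sqrt 1 < sqrt (1 + 4 * eps)) by (apply sqrt_lt_1_alt; lra). rewrite sqrt_1 in H. exact H. Qed.

Lemma D_fact t : t * (1 - t) + eps = (p - t) * (t - m).
Proof. unfold p, m. assert (H := s_sq). nra. Qed.

Lemma D_pos t : m < t < p -> 0 < t * (1 - t) + eps.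
Proof. intros. rewrite D_fact. apply Rmult_lt_0_compat; lra. Qed.

Lemma in01 a : 0 <= a <= 1 -> m < a < p.
Proof. assert (H := s_gt1). unfold m, p. lra. Qed.

Lemma cont_f z : m < z < p -> continuous f z.
Proof. intros Hz. apply (@ex_derive_continuous R_AbsRing R_NormedModule). unfold f. auto_derive.
  assert (H := D_pos z Hz). lra. Qed.
Lemma cont_g z : m < z < p -> continuous g z.
Proof. intros Hz. apply (@ex_derive_continuous R_AbsRing R_NormedModule). unfold g. auto_derive.
  assert (H := D_pos z Hz). lra. Qed.

Lemma btw a b z : m < a < p -> m < b < p -> Rmin a b <= z <= Rmax a b -> m < z < p.
Proof. intros. unfold Rmin, Rmax in *. destruct (Rle_dec a b); lra. Qed.

Lemma ex_f a b : m < a < p -> m < b < p -> ex_RInt f a b.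
Proof. intros. apply (@ex_RInt_continuous R_CompleteNormedModule). intros. apply cont_f. apply (btw a b); auto. Qed.
Lemma ex_g a b : m < a < p -> m < b < p -> ex_RInt g a b.
Proof. intros. apply (@ex_RInt_continuous R_CompleteNormedModule). intros. apply cont_g. apply (btw a b); auto. Qed.

Lemma loc a (P : R -> Prop) : m < a < p -> (forall y, m < y < p -> P y) -> locally a P.
Proof. intros Ha H. apply (locally_interval _ _ (Finite m) (Finite p)); simpl; try lra.
  intros. apply H; lra. Qed.

Lemma p1 : m < 1 < p.  Proof. apply in01; lra. Qed.
Lemma p0 : m < 0 < p.  Proof. apply in01; lra. Qed.

Lemma dF a : m < a < p -> is_derive (fun a => RInt f a 1) a (- f a).
Proof. intros Ha. apply (is_derive_RInt' f (fun a => RInt f a 1) a 1).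
  - apply loc; auto. intros. apply (@RInt_correct R_CompleteNormedModule). apply ex_f; auto. apply p1.
  - apply cont_f; auto. Qed.
Lemma dG a : m < a < p -> is_derive (fun a => RInt g 0 a) a (g a).
Proof. intros Ha. apply (is_derive_RInt g (fun a => RInt g 0 a) 0 a).
  - apply loc; auto. intros. apply (@RInt_correct R_CompleteNormedModule). apply ex_g; auto. apply p0.
  - apply cont_g; auto. Qed.

Lemma mvt (K dK : R -> R) x y : x < y -> m < x -> y < p ->
  (forall c, m < c < p -> is_derive K c (dK c)) ->
  exists c, K y - K x = dK c * (y - x) /\ x < c < y.
Proof. intros. apply MVT_cor2; auto. intros. apply is_derive_Reals. apply H2. lra. Qed.

Lemma const_lem (K : R -> R) x y : (forall z, m < z < p -> is_derive K z 0) ->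
  m < x < p -> m < y < p -> K x = K y.
Proof. intros HK Hx Hy. destruct (Rtotal_order x y) as [H|[H|H]].
  - destruct (mvt K (fun _ => 0) x y) as [c [Hc _]]; auto; try lra.
  - subst; auto.
  - destruct (mvt K (fun _ => 0) y x) as [c [Hc _]]; auto; try lra.
Qed.

Lemma dLB Delta a : m < a < p ->
  is_derive (fun a => LB a eps Delta) a (Delta + RInt f a 1 - RInt g 0 a).
Proof. intros Ha. unfold LB. eapply dval.
  apply dadd. apply dadd. apply dmul. apply did. apply dconst. apply dmul. apply did. apply (dF a Ha).
  apply dmul. apply dsub. apply dconst. apply did. apply (dG a Ha).
  assert (HD := D_pos a Ha). fixeq. cbv beta. unfold f, g. field. lra. Qed.

Lemma dFG a : m < a < p ->
  is_derive (fun a => RInt f a 1 - RInt g 0 a) a (- / (a * (1 - a) + eps)).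
Proof. intros Ha. eapply dval. apply dsub. apply (dF a Ha). apply (dG a Ha).
  assert (HD := D_pos a Ha). fixeq. cbv beta. unfold f, g. field. lra. Qed.

Lemma dH a : m < a < p ->
  is_derive (fun a => / s * ln ((p - a) / (a - m))) a (- / (a * (1 - a) + eps)).
Proof. intros Ha. assert (H1 := s_gt1). auto_derive.
  - split; [lra|split; [|trivial]]. apply Rmult_lt_0_compat; [lra| apply Rinv_0_lt_compat; lra].
  - rewrite D_fact. unfold p, m in *. field. repeat split; lra.
Qed.

Lemma mid : m < 1/2 < p. Proof. apply in01; lra. Qed.
Lemma sym z : m < z < p -> m < 1 - z < p.
Proof. unfold m, p. lra. Qed.

Lemma FG_half : RInt f (1/2) 1 = RInt g 0 (1/2).
Proof.
  assert (K := const_lem (fun a => RInt f a 1 - RInt g 0 (1 - a)) (1/2) 1).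
  cbv beta in K. rewrite RInt_point in K. replace (1 - 1) with 0 in K by ring.
  rewrite RInt_point in K. replace (1 - 1/2) with (1/2) in K by field.
  assert (RInt f (1 / 2) 1 - RInt g 0 (1 / 2) = 0).
  { rewrite K. change (@zero R_AbsRing) with 0. ring. 2: apply mid. 2: apply p1.
    intros z Hz. eapply dval. apply dsub. apply (dF z Hz).
    apply (dcomp (fun a => RInt g 0 a) (fun a => 1 - a)). apply (dG _ (sym z Hz)).
    apply dsub. apply dconst. apply did.
    fixeq. assert (HD := D_pos z Hz). unfold f, g.
    replace ((1 - z) * (1 - (1 - z)) + eps) with (z * (1 - z) + eps) by ring. field. lra. }
  lra.
Qed.

Lemma FG_eq a : m < a < p -> RInt f a 1 - RInt g 0 a = / s * ln ((p - a) / (a - m)).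
Proof. intros Ha.
  assert (K := const_lem (fun a => RInt f a 1 - RInt g 0 a - / s * ln ((p - a) / (a - m))) a (1/2)).
  cbv beta in K. rewrite FG_half in K.
  replace ((p - 1 / 2) / (1 / 2 - m)) with 1 in K.
  2: { unfold p, m. assert (H1 := s_gt1). field. lra. }
  rewrite ln_1 in K.
  assert (RInt f a 1 - RInt g 0 a - / s * ln ((p - a) / (a - m)) = 0).
  { rewrite K. ring. 2: auto. 2: apply mid.
    intros z Hz. eapply dval. apply dsub. apply (dFG z Hz). apply (dH z Hz). fixeq. ring. }
  lra.
Qed.

Lemma Lp_decr Delta x y : m < x -> x < y -> y < p ->
  Delta + RInt f y 1 - RInt g 0 y < Delta + RInt f x 1 - RInt g 0 x.
Proof. intros.
  destruct (mvt (fun a => Delta + RInt f a 1 - RInt g 0 a) (fun a => - / (a * (1 - a) + eps)) x y)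
    as [c [Hc Hc2]]; auto.
  intros c Hc. eapply dval. apply dsub. apply dadd. apply dconst. apply (dF c Hc). apply (dG c Hc).
  fixeq. assert (HD := D_pos c Hc). unfold f, g. field. lra.
  cbv beta in Hc. assert (HD := D_pos c ltac:(lra)).
  assert (0 < / (c * (1 - c) + eps)) by (apply Rinv_0_lt_compat; lra).
  assert (0 < / (c * (1 - c) + eps) * (y - x)) by (apply Rmult_lt_0_compat; lra).
  lra.
Qed.

Lemma concave_lt Delta x y t : 0 <= x -> x < y -> y <= 1 -> 0 < t < 1 ->
  t * LB x eps Delta + (1 - t) * LB y eps Delta < LB (t * x + (1 - t) * y) eps Delta.
Proof. intros Hx Hxy Hy Ht. set (z := t * x + (1 - t) * y).
  assert (Hz1 : x < z) by (unfold z; nra). assert (Hz2 : z < y) by (unfold z; nra).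
  assert (Hm := in01 x ltac:(lra)). assert (Hp := in01 y ltac:(lra)).
  destruct (mvt (fun a => LB a eps Delta) (fun a => Delta + RInt f a 1 - RInt g 0 a) x z)
    as [c1 [H1 Hc1]]; try lra. intros; apply dLB; auto.
  destruct (mvt (fun a => LB a eps Delta) (fun a => Delta + RInt f a 1 - RInt g 0 a) z y)
    as [c2 [H2 Hc2]]; try lra. intros; apply dLB; auto.
  cbv beta in H1, H2.
  assert (Hd := Lp_decr Delta c1 c2 ltac:(lra) ltac:(lra) ltac:(lra)).
  set (L1 := Delta + RInt f c1 1 - RInt g 0 c1) in *.
  set (L2 := Delta + RInt f c2 1 - RInt g 0 c2) in *.
  assert (E1 : z - x = (1 - t) * (y - x)) by (unfold z; ring).
  assert (E2 : y - z = t * (y - x)) by (unfold z; ring).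
  rewrite E1 in H1. rewrite E2 in H2.
  assert (0 < t * (1 - t) * (y - x)) by (apply Rmult_lt_0_compat; [apply Rmult_lt_0_compat|]; lra).
  assert (0 < t * (1 - t) * (y - x) * (L1 - L2)) by (apply Rmult_lt_0_compat; lra).
  nra.
Qed.

End S.

Theorem lemma4 (eps Delta : R) (heps : 0 < eps) :
  (forall alpha, 0 <= alpha <= 1 ->
     is_derive (fun a => LB a eps Delta) alpha
       (Delta + / sqrt (1 + 4 * eps) *
          ln (Rabs ((alpha - (1 + sqrt (1 + 4 * eps)) / 2) /
                    (alpha - (1 - sqrt (1 + 4 * eps)) / 2)))))
  /\ (forall alpha, 0 <= alpha <= 1 ->
     is_derive_n (fun a => LB a eps Delta) 2 alpha
       (- / (alpha * (1 - alpha) + eps)))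
  /\ (forall x y t, 0 <= x <= 1 -> 0 <= y <= 1 -> x <> y -> 0 < t < 1 ->
     t * LB x eps Delta + (1 - t) * LB y eps Delta
       < LB (t * x + (1 - t) * y) eps Delta).
Proof.
  split; [|split].
  - intros alpha Ha. assert (Hi := in01 eps heps alpha Ha).
    eapply dval. apply (dLB eps heps Delta alpha Hi). fixeq.
    assert (H1 := s_gt1 eps heps).
    set (F := RInt (fun t : R => (1 - t) / (t * (1 - t) + eps)) alpha 1).
    set (G := RInt (fun t : R => t / (t * (1 - t) + eps)) 0 alpha).
    replace (Delta + F - G) with (Delta + (F - G)) by ring.
    unfold F, G. rewrite (FG_eq eps heps alpha Hi).
    set (sq := sqrt (1 + 4 * eps)) in *.
    assert (Hv : 0 < / (alpha - (1 - sq) / 2)) by (apply Rinv_0_lt_compat; lra).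
    rewrite (Rabs_left ((alpha - (1 + sq) / 2) / (alpha - (1 - sq) / 2))).
    + f_equal. f_equal. f_equal. field. lra.
    + unfold Rdiv. assert (alpha - (1 + sq) / 2 < 0) by lra. nra.
  - intros alpha Ha. assert (Hi := in01 eps heps alpha Ha).
    change (is_derive (Derive (fun a => LB a eps Delta)) alpha (- / (alpha * (1 - alpha) + eps))).
    apply (is_derive_ext_loc (fun a => Delta + RInt (fun t : R => (1 - t) / (t * (1 - t) + eps)) a 1 -
          RInt (fun t : R => t / (t * (1 - t) + eps)) 0 a)).
    + apply (loc eps). exact Hi. intros y Hy. symmetry. apply is_derive_unique. apply (dLB eps heps Delta y Hy).
    + eapply dval. apply dsub. apply dadd. apply dconst. apply (dF eps heps alpha Hi). apply (dG eps heps alpha Hi).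
      fixeq. assert (HD := D_pos eps heps alpha Hi). field. lra.
  - intros x y t Hx Hy Hxy Ht. destruct (Rtotal_order x y) as [H|[H|H]].
    + apply concave_lt; lra.
    + contradiction.
    + replace (t * x + (1 - t) * y) with ((1 - t) * y + t * x) by ring.
      assert (K := concave_lt eps heps Delta y x (1 - t) ltac:(lra) H ltac:(lra) ltac:(lra)).
      replace (1 - (1 - t)) with t in K by ring. lra.
Qed.
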